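(* Let $E$ be a real Hilbert space, $C\subseteq E$ nonempty closed convex, $\rho=\sup_{x,y\in C}\lVert x-y\rVert\in[0,+\infty]$, $a\in C$, $0<\theta_1\leqslant\dots\leqslant\theta_T$, and $\widehat{x}_t^*\in E$ arbitrary predictions. Suppose the learner plays $\widetilde{x}_1=a$, $\widetilde{x}_t=P_C\big(\widetilde{x}_{t-1}-\theta_{t-1}x_{t-1}^*\big)$ for $t\geqslant2$, and $x_t=P_C\big(\widetilde{x}_t-\theta_t\widehat{x}_t^*\big)$. Then for all $z\in C$, \[\mathrm{Regret}(z,\dots,z)\leqslant\frac1{2\theta_1}\lVert z-a\rVert^2+\sum_{t=1}^T\frac1{\theta_t}Q_\rho^\star\big(\theta_t\lVert x_t^*-\widehat{x}_t^*\rVert\big)-\sum_{t=1}^T\frac1{2\theta_t}\lVert x_t-\widetilde{x}_t\rVert^2,\] and also \[\mathrm{Regret}(z,\dots,z)\leqslant\frac1{2\theta_1}\lVert z-a\rVert^2+\sum_{t=1}^T\frac1{\theta_t}\Phi_{\theta_t}(x_t^*,\widehat{x}_t^* )-\sum_{t=1}^T\frac1{2\theta_t}\lVert y_t-\widetilde{x}_t\rVert^2,\] where $y_t=P_C\big(\widetilde{x}_t-\theta_t\widehat{y}_t^*\big)$.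
   Context: $P_C$ is the metric projection onto $C$. Protocol: at rounds $t=1,\dots,T$ the learner plays $x_t\in C$, the adversary reveals a proper $\varphi_t\colon E\to(-\infty,+\infty]$ with $C\subseteq\operatorname{dom}\partial\varphi_t$, and $x_t^*\in\partial\varphi_t(x_t)$ ($E$ identified with its dual). $\mathrm{Regret}(z,\dots,z)=\sum_t\varphi_t(x_t)-\sum_t\varphi_t(z)$. $Q_\rho^\star(\varkappa)=\frac12\varkappa^2-\frac12(\lvert\varkappa\rvert-\rho)_+^2$ (with $Q_\infty^\star(\varkappa)=\frac12\varkappa^2$), $x_+=\max\{x,0\}$. $\widehat{y}_t^*=\lambda\widehat{x}_t^*+(1-\lambda)x_t^*$, $\lambda=\min\{\lVert x_t^*\rVert/\lVert x_t^*-\widehat{x}_t^*\rVert,1\}$ (any $\lambda$ if $x_t^*=\widehat{x}_t^*$). For $\xi>0$: $\Phi_\xi(x^*,\widehat{x}^* )=Q_\rho^\star\big(\xi\min\{\lVert x^*-\widehat{x}^*\rVert,\lVert x^*\rVert\}\big)+\xi\lVert x^*\rVert\min\{\xi(\lVert x^*-\widehat{x}^*\rVert-\lVert x^*\rVert)_+,\rho\}$. *)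

(* Defs.v *)
From HB Require Import structures.
From mathcomp Require Import all_boot all_order all_algebra.
From mathcomp Require Import all_classical all_reals all_analysis.
Set Implicit Arguments. Unset Strict Implicit. Unset Printing Implicit Defensive.
Import Order.TTheory GRing.Theory Num.Theory.
Import numFieldNormedType.Exports.
Local Open Scope classical_set_scope.
Local Open Scope ring_scope.

(* A real Hilbert space: a complete normed space (completeNormedModType R)
   whose norm comes from an inner product [ip]. *)
Definition is_inner_product (R : realType) (E : completeNormedModType R)
  (ip : E -> E -> R) : Prop :=
  [/\ (forall x y, ip x y = ip y x),
      (forall x y z, ip (x + y) z = ip x z + ip y z),
      (forall (k : R) x y, ip (k *: x) y = k * ip x y) &
      (forall x, ip x x = `|x| ^+ 2)].

Definition is_proj (R : realType) (E : completeNormedModType R)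
  (C : set E) (x p : E) : Prop :=
  C p /\ forall c, C c -> `|x - p| <= `|x - c|.

(* Subgradient (E identified with its dual through ip):
   s \in \partial f(x)  iff  f(x) finite and f(y) >= f(x) + <s, y - x>. *)
Definition is_subgrad (R : realType) (E : completeNormedModType R)
  (ip : E -> E -> R) (f : E -> \bar R) (x s : E) : Prop :=
  f x \is a fin_num /\ forall y, (f x + (ip s (y - x))%:E <= f y)%E.

Definition proper_fun (R : realType) (E : completeNormedModType R)
  (f : E -> \bar R) : Prop :=
  (forall x, f x != -oo%E) /\ exists x, f x != +oo%E.

Definition diam (R : realType) (E : completeNormedModType R) (C : set E)
  : \bar R :=
  ereal_sup [set (`|x - y|)%:E | x in C & y in C].

Definition pospart (R : realType) (x : R) : R := Num.max x 0.

Definition Qstar (R : realType) (rho : \bar R) (k : R) : R :=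
  match rho with
  | EFin r => k ^+ 2 / 2 - (pospart (`|k| - r)) ^+ 2 / 2
  | _ => k ^+ 2 / 2
  end.

Definition min_rho (R : realType) (rho : \bar R) (u : R) : R :=
  match rho with
  | EFin r => Num.min u r
  | _ => u
  end.

Definition Phi (R : realType) (E : completeNormedModType R) (rho : \bar R)
  (xi : R) (xs xh : E) : R :=
  Qstar rho (xi * Num.min `|xs - xh| `|xs|)
  + xi * `|xs| * min_rho rho (xi * pospart (`|xs - xh| - `|xs|)).

(* lambda = min{ |xs| / |xs - xh|, 1 }; when xs = xh any lambda gives the
   same yhat, and here the division by 0 yields lambda = 0. *)
Definition lam (R : realType) (E : completeNormedModType R) (xs xh : E) : R :=
  Num.min (`|xs| / `|xs - xh|) 1.

Definition yhat (R : realType) (E : completeNormedModType R) (xs xh : E) : E :=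
  lam xs xh *: xh + (1 - lam xs xh) *: xs.

(* Main.v *)
Require Import Defs.
From HB Require Import structures.
From mathcomp Require Import all_boot all_order all_algebra.
From mathcomp Require Import all_classical all_reals all_analysis.
From mathcomp Require Import ring lra.
Import Order.TTheory GRing.Theory Num.Theory.
Import numFieldNormedType.Exports.
Local Open Scope classical_set_scope.
Local Open Scope ring_scope.
Set Implicit Arguments.

Lemma ipBl (R : realType) (E : completeNormedModType R) (ip : E -> E -> R) :
  is_inner_product ip -> forall x y z, ip (x - y) z = ip x z - ip y z.
Proof.
case=> S D Z N x y z; rewrite D; congr (_ + _).
by rewrite -scaleN1r Z mulN1r.
Qed.

Lemma ip0l (R : realType) (E : completeNormedModType R) (ip : E -> E -> R) :
  is_inner_product ip -> forall z, ip 0 z = 0.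
Proof. by move=> H z; rewrite -(subrr z) (ipBl H) subrr. Qed.

Lemma ipBr (R : realType) (E : completeNormedModType R) (ip : E -> E -> R) :
  is_inner_product ip -> forall x y z, ip z (x - y) = ip z x - ip z y.
Proof. move=> H x y z; case: (H) => S _ _ _. by rewrite S (ipBl H) !(S z). Qed.

Lemma ipZr (R : realType) (E : completeNormedModType R) (ip : E -> E -> R) :
  is_inner_product ip -> forall k x y, ip x (k *: y) = k * ip x y.
Proof. case=> S _ Z _ k x y. by rewrite S Z S. Qed.

Lemma ip0r (R : realType) (E : completeNormedModType R) (ip : E -> E -> R) :
  is_inner_product ip -> forall z, ip z 0 = 0.
Proof. move=> H z; case: (H) => S _ _ _. by rewrite S (ip0l H). Qed.

Lemma ipNr (R : realType) (E : completeNormedModType R) (ip : E -> E -> R) :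
  is_inner_product ip -> forall x y, ip x (- y) = - ip x y.
Proof. by move=> H x y; rewrite -(sub0r y) (ipBr H) (ip0r H) sub0r. Qed.

Lemma normB2 (R : realType) (E : completeNormedModType R) (ip : E -> E -> R) :
  is_inner_product ip -> forall x y,
  `|x - y| ^+ 2 = `|x| ^+ 2 - 2 * ip x y + `|y| ^+ 2.
Proof.
move=> H x y; case: (H) => S _ _ N.
rewrite -N (ipBl H) !(ipBr H) !N (S y x); lra.
Qed.

Lemma cs (R : realType) (E : completeNormedModType R) (ip : E -> E -> R) :
  is_inner_product ip -> forall x y, ip x y <= `|x| * `|y|.
Proof.
move=> H x y.
have [->|x0] := eqVneq x 0; first by rewrite (ip0l H) normr0 mul0r.
have [->|y0] := eqVneq y 0; first by rewrite (ip0r H) normr0 mulr0.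
have nx : 0 < `|x| by rewrite normr_gt0.
have ny : 0 < `|y| by rewrite normr_gt0.
set k := `|y| / `|x|.
have k0 : 0 <= k by rewrite /k divr_ge0 // ltW.
have kx : k * `|x| = `|y| by rewrite /k divfK // gt_eqF.
have e := normB2 H (k *: x) y.
case: (H) => _ _ Z _.
rewrite Z normrZ ger0_norm // kx in e.
have h : 0 <= `|y| ^+ 2 - 2 * (k * ip x y) + `|y| ^+ 2 by rewrite -e sqr_ge0.
have h2 : k * ip x y <= `|y| ^+ 2 by lra.
have kp : 0 < k by rewrite /k divr_gt0.
clearbody k.
have h3 : k * ip x y <= k * (`|x| * `|y|).
  by rewrite mulrA kx -expr2.
by rewrite ler_pM2l in h3.
Qed.

Lemma conv_mem (R : realType) (E : completeNormedModType R) (C : set E) :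
  convex_set C -> forall c p s, C c -> C p -> 0 <= s -> s <= 1 ->
  C (p + s *: (c - p)).
Proof.
move=> HC c p s Cc Cp s0 s1.
have := HC c p (Itv01 s0 s1) (mem_set Cc) (mem_set Cp).
rewrite inE => h; have {}h : C (s *: c + (1 - s) *: p) := h.
have -> : p + s *: (c - p) = s *: c + (1 - s) *: p.
  by rewrite scalerBl scale1r scalerBr addrCA.
done.
Qed.

Lemma proj_vi (R : realType) (E : completeNormedModType R) (ip : E -> E -> R)
  (C : set E) : is_inner_product ip -> convex_set C ->
  forall u p c, is_proj C u p -> C c -> ip (u - p) (c - p) <= 0.
Proof.
move=> H HC u p c [Cp Hp] Cc.
set A := ip (u - p) (c - p).
set K := `|c - p| ^+ 2.
have K0 : 0 <= K by rewrite /K sqr_ge0.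
have key : forall s, 0 < s -> s <= 1 -> 2 * A <= s * K.
  move=> s s0 s1.
  have Cs := conv_mem HC c p s Cc Cp (ltW s0) s1.
  have := Hp _ Cs.
  rewrite opprD addrA.
  move=> h; have h2 : `|u - p| ^+ 2 <= `|u - p - s *: (c - p)| ^+ 2.
    by rewrite lerXn2r // nnegrE.
  rewrite [X in _ <= X](normB2 H) (ipZr H) normrZ ger0_norm in h2; last exact: ltW. rewrite exprMn -/A -/K in h2.
  have : s * (2 * A) <= s * (s * K) by lra.
  by rewrite ler_pM2l.
rewrite leNgt; apply/negP => A0.
have KA : 0 < K + A by lra.
have s1 : A / (K + A) <= 1 by rewrite ler_pdivrMr // mul1r; lra.
have := key (A / (K + A)) (divr_gt0 A0 KA) s1.
rewrite mulrAC ler_pdivlMr // => h.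
nra.
Qed.

Lemma proj3 (R : realType) (E : completeNormedModType R) (ip : E -> E -> R)
  (C : set E) : is_inner_product ip -> convex_set C ->
  forall xt th g p c, is_proj C (xt - th *: g) p -> C c ->
  th * ip g (p - c) <= (`|xt - c| ^+ 2 - `|xt - p| ^+ 2 - `|p - c| ^+ 2) / 2.
Proof.
move=> H HC xt th g p c Hp Cc.
have := @proj_vi _ _ _ _ H HC _ _ _ Hp Cc.
have -> : xt - th *: g - p = (xt - p) - th *: g.
  by rewrite addrAC.
rewrite (ipBl H).
case: (H) => S _ Z _.
rewrite Z.
have e : `|xt - c| ^+ 2 = `|xt - p| ^+ 2 - 2 * ip (xt - p) (c - p) + `|c - p| ^+ 2.
  rewrite -(normB2 H); congr (`| _ | ^+ 2).
  by rewrite opprB addrA subrK.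
have e2 : ip g (p - c) = - ip g (c - p).
  by rewrite -(opprB c p) -scaleN1r (ipZr H) mulN1r.
rewrite e e2 (distrC p c).
move=> h; lra.
Qed.


Lemma qstar_bound (R : realType) (rho : \bar R) (k r : R) :
  0 <= k -> 0 <= r -> (forall rr, rho = rr%:E -> r <= rr) ->
  k * r - r ^+ 2 / 2 <= Qstar rho k.
Proof.
move=> k0 r0 hr; case: rho hr => [rr||] hr /=; last 2 first.
- have : 0 <= (k - r) ^+ 2 by rewrite sqr_ge0. nra.
- have : 0 <= (k - r) ^+ 2 by rewrite sqr_ge0. nra.
have := hr rr erefl => rrr.
rewrite ger0_norm // /pospart.
have [hk|hk] := lerP (k - rr) 0.
- have : 0 <= (k - r) ^+ 2 by rewrite sqr_ge0. nra.
- nra.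
Qed.

Lemma stepA (R : realType) (E : completeNormedModType R) (ip : E -> E -> R)
  (rho : \bar R) : is_inner_product ip ->
  forall th xt x w z g h, 0 < th ->
  th * ip g (w - z) <= (`|xt - z| ^+ 2 - `|xt - w| ^+ 2 - `|w - z| ^+ 2) / 2 ->
  th * ip h (x - w) <= (`|xt - w| ^+ 2 - `|xt - x| ^+ 2 - `|x - w| ^+ 2) / 2 ->
  (forall rr, rho = rr%:E -> `|x - w| <= rr) ->
  th * ip g (x - z) <= (`|xt - z| ^+ 2 - `|w - z| ^+ 2) / 2
     + Qstar rho (th * `|g - h|) - `|xt - x| ^+ 2 / 2.
Proof.
move=> H th xt x w z g h th0 h1 h2 h3.
have q := @qstar_bound _ rho _ _ (mulr_ge0 (ltW th0) (normr_ge0 (g - h))) (normr_ge0 (x - w)) h3.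
have c := cs H (g - h) (x - w).
have c2 : th * ip (g - h) (x - w) <= th * (`|g - h| * `|x - w|).
  by rewrite ler_pM2l.
have e : ip g (x - z) = ip g (w - z) + ip h (x - w) + ip (g - h) (x - w).
  rewrite !(ipBl H) !(ipBr H); lra.
rewrite e; nra.
Qed.

Lemma nonexp (R : realType) (E : completeNormedModType R) (ip : E -> E -> R)
  (C : set E) : is_inner_product ip -> convex_set C ->
  forall u v p q, is_proj C u p -> is_proj C v q -> `|p - q| <= `|u - v|.
Proof.
move=> H HC u v p q Hp Hq.
have h1 := @proj_vi _ _ _ _ H HC _ _ _ Hp (proj1 Hq).
have h2 := @proj_vi _ _ _ _ H HC _ _ _ Hq (proj1 Hp).
have e1 : ip (u - p) (q - p) = - ip (u - p) (p - q).
  by rewrite -(opprB p q) (ipNr H).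
have e3 : (v - q) - (u - p) = (p - q) - (u - v).
  by rewrite !opprB addrACA [X in _ = X]addrACA (addrC v p).
have : ip ((v - q) - (u - p)) (p - q) <= 0.
  rewrite (ipBl H); lra.
rewrite e3 (ipBl H).
case: (H) => _ _ _ N; rewrite N => h.
have c := cs H (u - v) (p - q).
have [z0|nz] := eqVneq `|p - q| 0; first by rewrite z0.
have pz : 0 < `|p - q| by rewrite lt_neqAle eq_sym nz normr_ge0.
have : `|p - q| * `|p - q| <= `|u - v| * `|p - q| by rewrite -expr2; lra.
by rewrite ler_pM2r.
Qed.

Lemma yhat_facts (R : realType) (E : completeNormedModType R) (g hh : E) :
  `|g - yhat g hh| = Num.min `|g - hh| `|g| /\
  `|hh - yhat g hh| = pospart (`|g - hh| - `|g|).
Proof.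
rewrite /yhat.
set l := lam g hh.
have l0 : 0 <= l by rewrite /l /lam le_min ler01 andbT divr_ge0.
have l1 : l <= 1 by rewrite /l /lam ge_min lexx orbT.
have e1 : g - (l *: hh + (1 - l) *: g) = l *: (g - hh).
  rewrite scalerBl scale1r scalerBr opprD opprB.
  by rewrite (addrCA g) (addrCA g) subrr addr0 addrC.
have e2 : hh - (l *: hh + (1 - l) *: g) = (1 - l) *: (hh - g).
  have -> : hh - (l *: hh + (1 - l) *: g) = (hh - g) + (g - (l *: hh + (1 - l) *: g)).
    by rewrite addrA subrK.
  by rewrite e1 scalerBl scale1r -opprB scalerN opprK.
rewrite e1 e2 !normrZ (ger0_norm l0) ger0_norm ?subr_ge0 // (distrC hh g).
have g0 := normr_ge0 g.
rewrite /pospart.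
have [d0|dp] := eqVneq `|g - hh| 0.
  have -> : l = 0 by rewrite /l /lam d0 invr0 mulr0 min_l ?ler01.
  rewrite d0 mulr0 sub0r min_l // max_r //. by rewrite mulr0.
have dp' : 0 < `|g - hh| by rewrite lt_neqAle eq_sym dp normr_ge0.
have [gd|gd] := lerP `|g| `|g - hh|.
  have -> : l = `|g| / `|g - hh|.
    by rewrite /l /lam min_l // ler_pdivrMr // mul1r.
  rewrite divfK ?gt_eqF // ?min_r // mulrBl mul1r divfK ?gt_eqF // ?max_l ?subr_ge0 //; split=> //.
have -> : l = 1.
  by rewrite /l /lam min_r // ler_pdivlMr // mul1r ltW.
by rewrite mul1r subrr mul0r ?min_l ?ltW // ?max_r ?subr_le0 ?ltW //; split.
Qed.

Lemma stepB (R : realType) (E : completeNormedModType R) (ip : E -> E -> R)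
  (rho : \bar R) : is_inner_product ip ->
  forall th xt x y w z g hh yh, 0 < th ->
  th * ip g (w - z) <= (`|xt - z| ^+ 2 - `|xt - w| ^+ 2 - `|w - z| ^+ 2) / 2 ->
  th * ip yh (y - w) <= (`|xt - w| ^+ 2 - `|xt - y| ^+ 2 - `|y - w| ^+ 2) / 2 ->
  (forall rr, rho = rr%:E -> `|y - w| <= rr) ->
  (forall rr, rho = rr%:E -> `|x - y| <= rr) ->
  `|x - y| <= th * pospart (`|g - hh| - `|g|) ->
  `|g - yh| = Num.min `|g - hh| `|g| ->
  th * ip g (x - z) <= (`|xt - z| ^+ 2 - `|w - z| ^+ 2) / 2
     + Phi rho th g hh - `|xt - y| ^+ 2 / 2.
Proof.
move=> H th xt x y w z g hh yh th0 h1 h2 h3 h4 h5 h6.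
have A := @stepA _ _ _ rho H th xt y w z g yh th0 h1 h2 h3.
rewrite h6 in A.
have c := cs H g (x - y).
have m : `|x - y| <= min_rho rho (th * pospart (`|g - hh| - `|g|)).
  case: rho h3 h4 {A} => [rr||] h3 h4 //=.
  by rewrite le_min h5 h4.
have c2 : th * ip g (x - y) <= th * `|g| * min_rho rho (th * pospart (`|g - hh| - `|g|)).
  rewrite -mulrA ler_pM2l //; apply: (le_trans c).
  by rewrite ler_wpM2l.
have e : ip g (x - z) = ip g (y - z) + ip g (x - y).
  rewrite !(ipBr H); lra.
rewrite e /Phi; lra.
Qed.

Lemma tele (R : realType) (w D : nat -> R) (n : nat) :
  (forall t, (1 <= t <= n)%N -> w t.+1 <= w t) -> (forall t, 0 <= D t) ->
  \sum_(1 <= t < n.+2) w t * (D t - D t.+1) <= w 1%N * D 1%N - w n.+1 * D n.+2.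
Proof.
move=> hw hD; elim: n hw => [|n IH] hw.
  by rewrite big_nat1 mulrBr.
rewrite big_nat_recr //=.
have hw' : forall t, (1 <= t <= n)%N -> w t.+1 <= w t.
  move=> t /andP[h1 h2]; apply: hw; rewrite h1 /=; exact: leqW.
have := IH hw'.
have h : w n.+2 * D n.+2 <= w n.+1 * D n.+2.
  apply: ler_wpM2r; first exact: hD. apply: (hw n.+1). by rewrite leqnn.
move: (\sum_(1 <= t < n.+2) _) => S.
rewrite mulrBr; lra.
Qed.


Lemma final (R : realType) (T : nat) (theta f Dn P N : nat -> R) (za : R) :
  0 < theta 1%N -> (forall t, (1 <= t < T)%N -> theta t <= theta t.+1) ->
  (forall t, (1 <= t <= T)%N -> 0 < theta t) ->
  (forall t, 0 <= Dn t) -> Dn T.+1 = 0 -> Dn 1%N = za ->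
  (forall t, (1 <= t <= T)%N -> f t <= (theta t)^-1 * ((Dn t - Dn t.+1) / 2)
      + (theta t)^-1 * P t - N t / (2 * theta t)) ->
  \sum_(1 <= t < T.+1) f t <= za / (2 * theta 1%N)
     + \sum_(1 <= t < T.+1) (theta t)^-1 * P t
     - \sum_(1 <= t < T.+1) N t / (2 * theta t).
Proof.
move=> th1 hmono thpos hD hDT hD1 hf.
have tl : \sum_(1 <= t < T.+1) (theta t)^-1 * ((Dn t - Dn t.+1) / 2)
    <= za / (2 * theta 1%N).
  have e1 : za / (2 * theta 1%N) = (theta 1%N)^-1 * (Dn 1%N / 2).
    rewrite -hD1; field; by rewrite gt_eqF.
  rewrite e1.
  case: T hmono thpos hDT {hf} => [|n] hmono thpos hDT.
    rewrite big_geq // mulr_ge0 //; [by rewrite invr_ge0 ltW | by rewrite divr_ge0].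
  have hw : forall t, (1 <= t <= n)%N -> (theta t.+1)^-1 <= (theta t)^-1.
    move=> t /andP[h1 h2].
    rewrite lef_pV2 ?posrE ?thpos ?h1 //=; first by apply: hmono; rewrite h1.
    by rewrite ltnW.
  have hD' : forall t, 0 <= Dn t / 2 by move=> t; rewrite divr_ge0.
  have h := @tele R (fun t => (theta t)^-1) (fun t => Dn t / 2) n hw hD'.
  rewrite /= hDT mul0r mulr0 subr0 in h.
  apply: le_trans h; apply: ler_sum_nat => t _ /=.
  by rewrite mulrBl.
have := ler_sum_nat (fun t (ht : (1 <= t < T.+1)%N) => hf t ht).
rewrite !big_split /= sumrN; lra.
Qed.

Unset Implicit Arguments.

Theorem corollary8 (R : realType) (E : completeNormedModType R)
  (ip : E -> E -> R) (C : set E) (a : E) (T : nat)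
  (theta : nat -> R) (xhs : nat -> E) (phi : nat -> E -> \bar R)
  (xt x xs y : nat -> E) :
  is_inner_product ip ->
  closed C -> convex_set C -> C a ->
  0 < theta 1%N ->
  (forall t, (1 <= t < T)%N -> theta t <= theta t.+1) ->
  (* adversary: proper losses, C inside dom of the subdifferential *)
  (forall t, (1 <= t <= T)%N -> proper_fun (phi t)) ->
  (forall t, (1 <= t <= T)%N -> forall c, C c -> exists s, is_subgrad ip (phi t) c s) ->
  (* learner *)
  xt 1%N = a ->
  (forall t, (2 <= t <= T)%N ->
     is_proj C (xt t.-1 - theta t.-1 *: xs t.-1) (xt t)) ->
  (forall t, (1 <= t <= T)%N -> is_proj C (xt t - theta t *: xhs t) (x t)) ->
  (forall t, (1 <= t <= T)%N -> is_subgrad ip (phi t) (x t) (xs t)) ->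
  (* y_t = P_C (xt_t - theta_t yhat*_t) *)
  (forall t, (1 <= t <= T)%N ->
     is_proj C (xt t - theta t *: yhat (xs t) (xhs t)) (y t)) ->
  forall z, C z ->
  ((\sum_(1 <= t < T.+1) phi t (x t) - \sum_(1 <= t < T.+1) phi t z)%E <=
     (`|z - a| ^+ 2 / (2 * theta 1%N)
      + \sum_(1 <= t < T.+1) (theta t)^-1 * Qstar (diam C) (theta t * `|xs t - xhs t|)
      - \sum_(1 <= t < T.+1) `|x t - xt t| ^+ 2 / (2 * theta t))%:E)%E
  /\
  ((\sum_(1 <= t < T.+1) phi t (x t) - \sum_(1 <= t < T.+1) phi t z)%E <=
     (`|z - a| ^+ 2 / (2 * theta 1%N)
      + \sum_(1 <= t < T.+1) (theta t)^-1 * Phi (diam C) (theta t) (xs t) (xhs t)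
      - \sum_(1 <= t < T.+1) `|y t - xt t| ^+ 2 / (2 * theta t))%:E)%E.
Proof.
move=> H Ccl HC Ca th1 hmono hprop hsub xt1 hxt hx hxs hy z Cz.
have [T0|Tpos] := eqVneq T 0%N.
  rewrite T0 !big_geq // subee // subr0 addr0 lee_fin.
  have h : 0 <= `|z - a| ^+ 2 / (2 * theta 1%N).
    by rewrite divr_ge0 ?sqr_ge0 // mulr_ge0 // ltW.
  by split.
set rho := diam C.
have thpos : forall t, (1 <= t <= T)%N -> 0 < theta t.
  elim=> [|t IH] // /andP[_ h2].
  case: t IH h2 => [|t] IH h2; first exact: th1.
  apply: (lt_le_trans (IH _)); first by rewrite /= ltnW.
  by apply: hmono; rewrite /=.
have diam_ub : forall p q, C p -> C q -> forall rr, rho = rr%:E -> `|p - q| <= rr.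
  move=> p q Cp Cq rr hr; rewrite -lee_fin -hr /rho /diam.
  apply: ereal_sup_ubound; exists p => //; exists q => //.
have CX : forall t, (1 <= t <= T)%N -> C (xt t).
  case=> [|[|t]] // ht; first by rewrite xt1.
  exact: (proj1 (hxt t.+2 ht)).
pose W := fun t => if (t < T)%N then xt t.+1 else z.
pose Dn := fun t => if (t <= T)%N then `|xt t - z| ^+ 2 else 0.
have CW : forall t, (1 <= t <= T)%N -> C (W t).
  move=> t /andP[h1 h2]; rewrite /W; case: ifP => ht //.
  by apply: CX; rewrite ht.
have hW1 : forall t, (1 <= t <= T)%N -> theta t * ip (xs t) (W t - z) <=
    (`|xt t - z| ^+ 2 - `|xt t - W t| ^+ 2 - `|W t - z| ^+ 2) / 2.
  move=> t /andP[h1 h2]; rewrite /W; case: ifP => htT.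
    apply: (@proj3 _ _ _ _ H HC _ _ _ _ _ (hxt t.+1 _) Cz).
    by rewrite ltnS h1 htT.
  rewrite subrr (ip0r H) mulr0 normr0; lra.
have hWD : forall t, (1 <= t <= T)%N -> `|W t - z| ^+ 2 = Dn t.+1.
  move=> t _; rewrite /W /Dn; case: ifP => htT //.
  by rewrite subrr normr0 expr0n.
have hDt : forall t, (1 <= t <= T)%N -> Dn t = `|xt t - z| ^+ 2.
  by move=> t /andP[_ h]; rewrite /Dn h.
have hD0 : forall t, 0 <= Dn t.
  by move=> t; rewrite /Dn; case: ifP => _ //; rewrite sqr_ge0.
have hDT : Dn T.+1 = 0 by rewrite /Dn ltnn.
have hD1 : Dn 1%N = `|z - a| ^+ 2.
  by rewrite /Dn lt0n Tpos xt1 distrC.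
have fx : forall t, (1 <= t <= T)%N -> phi t (x t) \is a fin_num.
  by move=> t ht; case: (hxs t ht).
have fz : forall t, (1 <= t <= T)%N -> phi t z \is a fin_num.
  by move=> t ht; case: (hsub t ht z Cz) => s [].
have LHS : (\sum_(1 <= t < T.+1) phi t (x t) - \sum_(1 <= t < T.+1) phi t z)%E =
   (\sum_(1 <= t < T.+1) (fine (phi t (x t)) - fine (phi t z)))%:E.
  have S1 : \sum_(1 <= t < T.+1) phi t (x t) = (\sum_(1 <= t < T.+1) fine (phi t (x t)))%:E.
    by rewrite -sumEFin; apply: eq_big_nat => t ht; rewrite fineK //; apply: fx.
  have S2 : \sum_(1 <= t < T.+1) phi t z = (\sum_(1 <= t < T.+1) fine (phi t z))%:E.
    by rewrite -sumEFin; apply: eq_big_nat => t ht; rewrite fineK //; apply: fz.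
  by rewrite S1 S2 -EFinB sumrB.
have sg : forall t, (1 <= t <= T)%N ->
    fine (phi t (x t)) - fine (phi t z) <= ip (xs t) (x t - z).
  move=> t ht; have [_ hh] := hxs t ht; have := hh z.
  rewrite -(fineK (fx t ht)) -(fineK (fz t ht)) -EFinD lee_fin.
  rewrite -(opprB (x t) z) (ipNr H); lra.
rewrite LHS !lee_fin; split.
- apply: (@final R T theta (fun t => fine (phi t (x t)) - fine (phi t z)) Dn
    (fun t => Qstar rho (theta t * `|xs t - xhs t|)) (fun t => `|x t - xt t| ^+ 2)
    _ th1 hmono thpos hD0 hDT hD1) => t ht.
  have th0 := thpos t ht.
  have A := @stepA _ _ _ rho H (theta t) (xt t) (x t) (W t) z (xs t) (xhs t) th0
    (hW1 t ht) (@proj3 _ _ _ _ H HC _ _ _ _ _ (hx t ht) (CW t ht))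
    (diam_ub _ _ (proj1 (hx t ht)) (CW t ht)).
  rewrite hWD // -hDt // in A.
  apply: (le_trans (sg t ht)).
  have -> : (theta t)^-1 * ((Dn t - Dn t.+1) / 2) +
     (theta t)^-1 * Qstar rho (theta t * `|xs t - xhs t|) -
     `|x t - xt t| ^+ 2 / (2 * theta t) =
     (theta t)^-1 * ((Dn t - Dn t.+1) / 2 + Qstar rho (theta t * `|xs t - xhs t|)
        - `|xt t - x t| ^+ 2 / 2).
    rewrite (distrC (x t)); field; by rewrite gt_eqF.
  by rewrite -(ler_pM2l th0) mulrA mulfV ?gt_eqF // mul1r.
- apply: (@final R T theta (fun t => fine (phi t (x t)) - fine (phi t z)) Dn
    (fun t => Phi rho (theta t) (xs t) (xhs t)) (fun t => `|y t - xt t| ^+ 2)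
    _ th1 hmono thpos hD0 hDT hD1) => t ht.
  have th0 := thpos t ht.
  have [f1 f2] := @yhat_facts _ _ (xs t) (xhs t).
  have h5 : `|x t - y t| <= theta t * pospart (`|xs t - xhs t| - `|xs t|).
    have := @nonexp _ _ _ _ H HC _ _ _ _ (hx t ht) (hy t ht).
    have -> : xt t - theta t *: xhs t - (xt t - theta t *: yhat (xs t) (xhs t))
        = theta t *: (yhat (xs t) (xhs t) - xhs t).
      by rewrite opprB addrC addrA subrK scalerBr.
    move=> h; apply: (le_trans h); rewrite normrZ ger0_norm; [by rewrite distrC f2 | exact: ltW].
  have B := @stepB _ _ _ rho H (theta t) (xt t) (x t) (y t) (W t) z (xs t) (xhs t)
    (yhat (xs t) (xhs t)) th0
    (hW1 t ht) (@proj3 _ _ _ _ H HC _ _ _ _ _ (hy t ht) (CW t ht))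
    (diam_ub _ _ (proj1 (hy t ht)) (CW t ht))
    (diam_ub _ _ (proj1 (hx t ht)) (proj1 (hy t ht))) h5 f1.
  rewrite hWD // -hDt // in B.
  apply: (le_trans (sg t ht)).
  have -> : (theta t)^-1 * ((Dn t - Dn t.+1) / 2) +
     (theta t)^-1 * Phi rho (theta t) (xs t) (xhs t) -
     `|y t - xt t| ^+ 2 / (2 * theta t) =
     (theta t)^-1 * ((Dn t - Dn t.+1) / 2 + Phi rho (theta t) (xs t) (xhs t)
        - `|xt t - y t| ^+ 2 / 2).
    rewrite (distrC (y t)); field; by rewrite gt_eqF.
  by rewrite -(ler_pM2l th0) mulrA mulfV ?gt_eqF // mul1r.
Qed.
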